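(* If $G$ is a finite simple graph with no connected component of order less than $3$, then ${\chi^\Sigma_g}^\star(G)\leq \Delta(G)+\mathrm{col}(G)-1\leq 2\Delta(G)$.
   Context: For an Abelian group $\mathcal{G}$ with identity $0$ and $f\colon E(G)\to\mathcal{G}$, $w_f(v)=\sum_{u\in N(v)}f(uv)$. The nowhere-zero group sum chromatic number ${\chi^\Sigma_g}^\star(G)$ is the least positive integer $k$ such that for every Abelian group $\mathcal{G}$ of order $k$ there exists $f\colon E(G)\to\mathcal{G}\setminus\{0\}$ with $w_f(u)\neq w_f(v)$ for every edge $uv$. $\Delta(G)$ is the maximum degree; the coloring number $\mathrm{col}(G)$ is the least $k$ such that every subgraph of $G$ has minimum degree less than $k$. *)

(* Defs.v *)
(* A finite simple graph is a symmetric irreflexive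
   relation e : rel T on a finType T. *)
From HB Require Import structures.
From mathcomp Require Import all_boot all_order all_algebra.
Set Implicit Arguments. Unset Strict Implicit. Unset Printing Implicit Defensive.
Import Order.TTheory GRing.Theory Num.Theory.

Section Graphs.
Variable T : finType.
Variable e : rel T.

Definition edges : {set {set T}} := [set [set p.1; p.2] | p : T * T & e p.1 p.2].

Definition nbhd (v : T) : {set T} := [set u | e v u].
Definition deg (v : T) : nat := #|nbhd v|.

Definition max_deg : nat := \max_(v : T) deg v.

Definition wsum (M : zmodType) (f : {set T} -> M) (v : T) : M :=
  (\sum_(u in nbhd v) f [set v; u])%R.

Definition nz_gsum_ok (k : nat) : Prop :=
  forall M : finZmodType, #|[set: M]| = k ->
    exists f : {set T} -> M,
      (forall x, x \in edges -> f x != 0%R) /\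
      (forall u v, e u v -> wsum f u != wsum f v).

Definition is_nz_gsum_chi (k : nat) : Prop :=
  0 < k /\ nz_gsum_ok k /\ (forall j, 0 < j -> j < k -> ~ nz_gsum_ok j).

Definition col_ok (k : nat) : bool :=
  [forall S : {set T}, forall F : {set {set T}},
     [&& S != set0, F \subset edges & [forall x in F, x \subset S]] ==>
     [exists v in S, #|[set u | [set v; u] \in F]| < k]].

Lemma col_ok_exists : exists k, col_ok k.
Proof.
exists #|T|.+1; apply/forallP => S; apply/forallP => F; apply/implyP.
case/and3P => /set0Pn [v vS] _ _; apply/existsP; exists v.
by rewrite vS /= ltnS max_card.
Qed.

Definition col_num : nat := ex_minn col_ok_exists.

End Graphs.

(* Main.v *)
Require Import Defs.
From mathcomp Require Import all_boot all_order all_algebra zify.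
From Stdlib Require Import Classical.
Set Implicit Arguments. Unset Strict Implicit. Unset Printing Implicit Defensive.
Import Order.TTheory GRing.Theory Num.Theory.

Lemma cardU_le (T : finType) (A B : {set T}) : #|A :|: B| <= #|A| + #|B|.
Proof. by rewrite cardsU leq_subr. Qed.

Lemma avoid (M : finZmodType) (Y : {set M}) : #|Y| < #|M| -> exists y, y \notin Y.
Proof.
move=> hY; apply/existsP; rewrite -negb_forall; apply/negP => /forallP hall.
have : #|M| <= #|Y| by rewrite -cardsT; apply: subset_leq_card; apply/subsetP=> y _; exact: hall.
by rewrite leqNgt hY.
Qed.

Section G.
Variable T : finType.
Variable e : rel T.
Hypothesis e_sym : symmetric e.
Hypothesis e_irr : irreflexive e.

Lemma closed_conn (A : {set T}) : (forall a b, a \in A -> e a b -> b \in A) ->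
  forall x z, x \in A -> connect e x z -> z \in A.
Proof.
move=> hA x z hx /connectP [pth]; elim: pth x hx => [|y pth IH] x hx /=.
  by move=> _ ->.
by case/andP => exy hp hz; exact: (IH y (hA _ _ hx exy) hp hz).
Qed.

Lemma edge_mem v u : [set v; u] \in edges e -> e v u.
Proof.
case/imsetP => [[x y]] /=; rewrite inE /= => exy.
move=> H.
have hv : v \in [set x; y] by rewrite -H set21.
have hu : u \in [set x; y] by rewrite -H set22.
have hx : x \in [set v; u] by rewrite H set21.
have hy : y \in [set v; u] by rewrite H set22.
rewrite !inE in hv hu hx hy.
case/orP: hv => /eqP hv; subst v.
  case/orP: hu => /eqP hu; subst u => //.
  by move: hy; rewrite orbb eq_sym => /eqP hy; subst y; rewrite e_irr in exy.
case/orP: hu => /eqP hu; subst u; first by rewrite e_sym.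
by move: hx; rewrite orbb => /eqP hx; subst x; rewrite e_irr in exy.
Qed.

Lemma mem_edge v u : e v u -> [set v; u] \in edges e.
Proof. move=> h; rewrite /edges; apply/imsetP; exists (v, u) => //; by rewrite inE. Qed.

Lemma deg_max v : deg e v <= max_deg e.
Proof. rewrite /max_deg; apply: (@leq_bigmax T (fun v => deg e v)). Qed.

End G.

Lemma arA (a P d K : nat) (b t : bool) : a + P <= d -> 1 + b <= P -> d + 2 <= K + b -> t.+1 + a < K.
Proof. lia. Qed.
Lemma arB (a P d D K : nat) : a + P <= d -> 1 <= P -> d <= D -> D < K -> 1 + a < K.
Proof. lia. Qed.
Lemma arX (s4 s1 s2 s3 fr fq Pr Pq dr dq K : nat) (b : bool) :
  s4 <= 2 -> s1 <= fr -> s2 <= fq -> s3 <= b -> fr + Pr <= dr -> 1 + b <= Pr ->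
  fq + Pq <= dq -> 2 <= Pq -> dq + dr <= K -> s4 + s1 + s2 + s3 < K.
Proof. lia. Qed.

Lemma arI (f' f P P' d : nat) (b : bool) : f' <= f + b -> b + P <= P' -> f + P' <= d -> f' + P <= d.
Proof. lia. Qed.

Section Zm.
Local Open Scope ring_scope.
Variable M : zmodType.
Lemma zL1 (a b : M) : (a + b) - a = b. Proof. by rewrite addrC addKr. Qed.
Lemma zL2 (a b c : M) : (a + (b + c)) - a - b = c. Proof. by rewrite zL1 zL1. Qed.
Lemma zL3 (a b : M) : (a + b) - b = a. Proof. by rewrite addrK. Qed.
Lemma neq_pq (a b x y : M) : x != a - b -> a + y != b + (y + x).
Proof.
apply: contra => /eqP E; apply/eqP.
have -> : a = b + (y + x) - y by rewrite -E addrK.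
by rewrite [y + x]addrC addrA addrK zL1.
Qed.
Lemma neq_qr (k r x y : M) : y != r - k -> k + (y + x) != r + x.
Proof.
apply: contra => /eqP E; apply/eqP.
have -> : r = k + (y + x) - x by rewrite E addrK.
by rewrite addrA addrK zL1.
Qed.
Lemma zL4 (a y b : M) : (a + (y + b)) - (a + b) = y. Proof. by rewrite addrCA addrK. Qed.
Lemma neq_pr (p r x y : M) : x != p + y - r -> p + y != r + x.
Proof. by apply: contra => /eqP ->; rewrite zL1. Qed.
End Zm.

Lemma set2_neq (T : finType) (a b a' b' : T) : a \notin [set a'; b'] -> [set a; b] != [set a'; b'].
Proof. by move=> h; apply/eqP => E; move: h; rewrite -E set21. Qed.

Lemma set2_neq' (T : finType) (a b a' b' : T) : b \notin [set a'; b'] -> [set a; b] != [set a'; b'].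
Proof. by move=> h; apply/eqP => E; move: h; rewrite -E set22. Qed.

Lemma inUl (T : finType) (A B : {set T}) x : x \in A -> x \in A :|: B.
Proof. by move=> h; rewrite inE h. Qed.
Lemma inUr (T : finType) (A B : {set T}) x : x \in B -> x \in A :|: B.
Proof. by move=> h; rewrite inE h orbT. Qed.

Lemma sum2 (T : finType) (M : zmodType) (q r : T) (b : bool) (G : T -> M) : q != r ->
  (\sum_(u | (u == q) || b && (u == r)) G u = G q + (if b then G r else 0))%R.
Proof.
move=> nqr; rewrite (bigD1 q) ?eqxx //=; congr (_ + _)%R; case: b.
  apply: big_pred1 => u /=.
  by case: (eqVneq u q) => [->|hq] /=; rewrite ?(negbTE nqr) ?andbT.
by apply: big_pred0 => u /=; rewrite orbF andbN.
Qed.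

Ltac bsimp := repeat (match goal with H : is_true (?a != ?b) |- context [?a == ?b] => rewrite (negbTE H) end).

Section Main.
Variable T : finType.
Variable e : rel T.
Hypothesis e_sym : symmetric e.
Hypothesis e_irr : irreflexive e.
Variable M : finZmodType.
Hypothesis hK : max_deg e < #|M|.

Definition ssum (S : {set T}) (c : T -> M) (f : {set T} -> M) v :=
  (c v + \sum_(u | e v u && (u \in S)) f [set v; u])%R.

Definition good (S : {set T}) (c : T -> M) (F : T -> {set M}) (f : {set T} -> M) :=
  [/\ forall u v, u \in S -> v \in S -> e u v -> f [set u; v] != 0%R,
      forall v, v \in S -> ssum S c f v \notin F v &
      forall u v, u \in S -> v \in S -> e u v -> ssum S c f u != ssum S c f v].

Definition invt (S : {set T}) (c : T -> M) (F : T -> {set M}) :=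
  (forall v, v \in S -> #|F v| + #|[set u | e v u && (u \in S)]| <= deg e v) /\
  (forall v, v \in S -> (forall u, e v u -> u \in S) -> c v = 0%R).

Definition TC (K : nat) p q r :=
  [/\ p != q, q != r, p != r, e p q & e q r] /\ deg e q + deg e r <= K /\
  (deg e p + 2 <= K + e p r \/ (nbhd e q \subset [set p; r] /\ nbhd e r \subset [set q])).

Lemma triple p q r c F : TC #|M| p q r -> invt [set p; q; r] c F ->
  exists f, good [set p; q; r] c F f.
Proof.
case=> [[npq nqr npr epq eqr] [hdeg hcase]] [hinv hoff].
set S3 := [set p; q; r].
have Sp : p \in S3 by rewrite !inE eqxx.
have Sq : q \in S3 by rewrite !inE eqxx orbT.
have Sr : r \in S3 by rewrite !inE eqxx !orbT.
have nqp : q != p by rewrite eq_sym.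
have nrq : r != q by rewrite eq_sym.
have nrp : r != p by rewrite eq_sym.
have erp : e r p = e p r by rewrite e_sym.
have eqp : e q p by rewrite e_sym.
have erq : e r q by rewrite e_sym.
have Pp : forall u, (e p u && (u \in S3)) = (u == q) || (e p r && (u == r)).
  move=> u; rewrite !inE.
  by case: (eqVneq u p) => [->|hup]; [|case: (eqVneq u q) => [->|huq]; [|case: (eqVneq u r) => [->|hur]]];
    bsimp; rewrite ?e_irr ?epq ?eqp ?eqr ?erq ?erp /= ?andbT ?andbF ?orbT ?orbF.
have Pq : forall u, (e q u && (u \in S3)) = (u == p) || (true && (u == r)).
  move=> u; rewrite !inE.
  by case: (eqVneq u p) => [->|hup]; [|case: (eqVneq u q) => [->|huq]; [|case: (eqVneq u r) => [->|hur]]];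
    bsimp; rewrite ?e_irr ?epq ?eqp ?eqr ?erq ?erp /= ?andbT ?andbF ?orbT ?orbF.
have Pr : forall u, (e r u && (u \in S3)) = (u == q) || (e p r && (u == p)).
  move=> u; rewrite !inE.
  by case: (eqVneq u p) => [->|hup]; [|case: (eqVneq u q) => [->|huq]; [|case: (eqVneq u r) => [->|hur]]];
    bsimp; rewrite ?e_irr ?epq ?eqp ?eqr ?erq ?erp /= ?andbT ?andbF ?orbT ?orbF.
have Pp' : forall u, (u \in [set u | e p u && (u \in S3)]) = (u == q) || (e p r && (u == r)).
  by move=> u; rewrite -Pp in_set.
have Pq' : forall u, (u \in [set u | e q u && (u \in S3)]) = (u == p) || (true && (u == r)).
  by move=> u; rewrite -Pq in_set.
have Pr' : forall u, (u \in [set u | e r u && (u \in S3)]) = (u == q) || (e p r && (u == p)).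
  by move=> u; rewrite -Pr in_set.
have Cp : 1 + e p r <= #|[set u | e p u && (u \in S3)]|.
  case epr: (e p r).
    apply: leq_trans (subset_leq_card (_ : [set q; r] \subset _)); first by rewrite cards2 nqr.
    apply/subsetP => u.
    by rewrite Pp' !inE epr /=.
  apply: leq_trans (subset_leq_card (_ : [set q] \subset _)); first by rewrite cards1.
  apply/subsetP => u.
  by rewrite Pp' !inE => ->.
have Cq : 2 <= #|[set u | e q u && (u \in S3)]|.
  apply: leq_trans (subset_leq_card (_ : [set p; r] \subset _)); first by rewrite cards2 npr.
  apply/subsetP => u.
  by rewrite Pq' !inE.
have Cr : 1 + e p r <= #|[set u | e r u && (u \in S3)]|.
  case epr: (e p r).
    apply: leq_trans (subset_leq_card (_ : [set q; p] \subset _)); first by rewrite cards2 nqp.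
    apply/subsetP => u.
    by rewrite Pr' !inE epr /=.
  apply: leq_trans (subset_leq_card (_ : [set q] \subset _)); first by rewrite cards1.
  apply/subsetP => u.
  by rewrite Pr' !inE => ->.
have Ip := hinv p Sp; have Iq := hinv q Sq; have Ir := hinv r Sr.
have Dp := deg_max e p; have Dq := deg_max e q.
have [a ha] : exists a : M, a \notin [set 0%R].
  apply: avoid; rewrite cards1; apply: leq_ltn_trans _ hK.
  exact: ltnW (leq_trans (leq_trans Cq (leq_addl _ _)) (leq_trans Iq Dq)).
rewrite inE in ha.
set z := if e p r then a else 0%R.
set pi := (c p + z)%R; set ka := c q; set rho := (c r + z)%R.
set Y := [set 0%R; (rho - ka)%R] :|: [set (t - pi)%R | t in F p].
have [y hy] : exists y, y \notin Y.
  apply: avoid; apply: leq_ltn_trans (cardU_le _ _) _.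
  apply: leq_ltn_trans (leq_add (leqnn _) (leq_imset_card _ _)) _.
  case: hcase => [hA | [hBq hBr]].
    rewrite cards2; exact: arA Ip Cp hA.
  have epr : e p r = false.
    apply/negbTE/negP => epr; have : p \in nbhd e r by rewrite inE erp.
    by move/(subsetP hBr); rewrite inE (negbTE npq).
  have cq0 : c q = 0%R.
    apply: hoff => // u equ; have : u \in nbhd e q by rewrite inE.
    by move/(subsetP hBq); rewrite !inE => /orP [] ->; rewrite ?orbT.
  have cr0 : c r = 0%R.
    apply: hoff => // u eru; have : u \in nbhd e r by rewrite inE.
    by move/(subsetP hBr); rewrite !inE => ->; rewrite orbT.
  have -> : (rho - ka = 0)%R by rewrite /rho /ka /z epr cq0 cr0 addr0 subrr.
  rewrite setUid cards1; rewrite epr in Cp; exact: arB Ip Cp Dp hK.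
move: hy; rewrite !inE negb_or => /andP [hy hy2]; rewrite negb_or in hy.
case/andP: hy => hy0 hy1.
set X := [set 0%R; (pi - ka)%R] :|: [set (t - rho)%R | t in F r] :|: [set (t - ka - y)%R | t in F q]
   :|: (if e p r then [set (pi + y - rho)%R] else set0).
have [x hx] : exists x, x \notin X.
  apply: avoid.
  apply: leq_ltn_trans (cardU_le _ _) _.
  apply: leq_ltn_trans (leq_add (cardU_le _ _) (leqnn _)) _.
  apply: leq_ltn_trans (leq_add (leq_add (cardU_le _ _) (leqnn _)) (leqnn _)) _.
  have c1 := leq_imset_card (fun t => (t - rho)%R) (F r).
  have c2 := leq_imset_card (fun t => (t - ka - y)%R) (F q).
  have c3 : #|if e p r then [set (pi + y - rho)%R] else set0| <= e p r.
    by case: (e p r); rewrite ?cards1 ?cards0.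
  have c4 : #|[set 0%R; (pi - ka)%R]| <= 2 by rewrite cards2; case: (_ != _).
  exact: arX c4 c1 c2 c3 Ir Cr Iq Cq hdeg.
move: hx; rewrite !inE !negb_or => /andP [/andP [/andP [/andP [hx0 hx1] hx2] hx3] hx4].
set f := fun X : {set T} => if X == [set p; q] then y else if X == [set q; r] then x else a.
exists f.
have rpq : r \notin [set p; q] by rewrite !inE negb_or nrp nrq.
have pqr : p \notin [set q; r] by rewrite !inE negb_or npq npr.
have Epq : f [set p; q] = y by rewrite /f eqxx.
have Eqp : f [set q; p] = y by rewrite /f setUC eqxx.
have Eqr : f [set q; r] = x by rewrite /f (negbTE (set2_neq' _ rpq)) eqxx.
have Erq : f [set r; q] = x by rewrite setUC Eqr.
have Epr : f [set p; r] = a by rewrite /f (negbTE (set2_neq' _ rpq)) (negbTE (set2_neq _ pqr)).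
have Erp : f [set r; p] = a by rewrite setUC Epr.
have Sp' : ssum S3 c f p = (pi + y)%R.
  by rewrite /ssum (eq_bigl _ _ Pp) sum2 // Epq Epr /pi /z -addrA (addrC y).
have Sq' : ssum S3 c f q = (ka + (y + x))%R.
  by rewrite /ssum (eq_bigl _ _ Pq) sum2 // Eqp Eqr.
have Sr' : ssum S3 c f r = (rho + x)%R.
  by rewrite /ssum (eq_bigl _ _ Pr) sum2 // Erq Erp /rho /z -addrA (addrC x).
have in3 : forall v, v \in S3 -> [|| v == p, v == q | v == r].
  by move=> v; rewrite /S3 !inE; case/orP => [/orP[]|] ->; rewrite ?orbT.
split.
- move=> u v _ _ _; rewrite /f; case: ifP => _; first exact: hy0.
  by case: ifP => _; [exact: hx0 | exact: ha].
- move=> v /in3 /or3P [] /eqP ->.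
  + rewrite Sp'; apply/negP => h; move/negP: hy2; apply; apply/imsetP.
    by exists (pi + y)%R => //; rewrite zL1.
  + rewrite Sq'; apply/negP => h; move/negP: hx3; apply; apply/imsetP.
    by exists (ka + (y + x))%R => //; rewrite zL2.
  + rewrite Sr'; apply/negP => h; move/negP: hx2; apply; apply/imsetP.
    by exists (rho + x)%R => //; rewrite zL1.
- move=> u v /in3 /or3P [] /eqP -> /in3 /or3P [] /eqP -> euv; rewrite ?e_irr // in euv.
  + by rewrite Sp' Sq'; exact: neq_pq hx1.
  + rewrite Sp' Sr'; apply: neq_pr; by rewrite euv inE in hx4.
  + by rewrite Sp' Sq' eq_sym; exact: neq_pq hx1.
  + by rewrite Sq' Sr'; exact: neq_qr hy1.
  + rewrite Sp' Sr' eq_sym; apply: neq_pr; by rewrite erp in euv; rewrite euv inE in hx4.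
  + by rewrite Sq' Sr' eq_sym; exact: neq_qr hy1.
Qed.


Inductive built (K : nat) : {set T} -> Prop :=
| bt0 : built K set0
| btV A v u : built K A -> v \notin A -> u \in A -> e v u -> built K (v |: A)
| btT A p q r : built K A -> TC K p q r ->
    (forall t w, t \in [set p; q; r] -> e t w -> w \notin A) -> built K (A :|: [set p; q; r]).

Lemma sub2 (a b : T) (A : {set T}) : ([set a; b] \subset A) = (a \in A) && (b \in A).
Proof. by rewrite subUset !sub1set. Qed.

Lemma solve A0 : built #|M| A0 -> forall c F, invt A0 c F -> exists f, good A0 c F f.
Proof.
elim => [| S v u bS IH vS uS evu | S p q r bS IH htc hnb].
- move=> c F _; exists (fun _ => 0%R); split => [u v|v|u v]; by rewrite inE.
- move=> c F [hinv hoff].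
  have vS' : v \in v |: S by rewrite setU11.
  have Sv : forall x, x \in S -> x != v by move=> x xS; apply: contraNneq vS => <-.
  have Dv := deg_max e v.
  have Cv : 1 <= #|[set w | e v w && (w \in v |: S)]|.
    by apply/card_gt0P; exists u; rewrite !inE evu uS orbT.
  have Iv := hinv v vS'.
  have [a ha] : exists a : M, a \notin [set 0%R].
    apply: avoid; rewrite cards1; apply: leq_ltn_trans _ hK.
    exact: leq_trans (leq_trans Cv (leq_addl _ _)) (leq_trans Iv Dv).
  rewrite inE in ha.
  set R := (\sum_(w | (e v w && (w \in S)) && (w != u)) a)%R.
  set sig := (c v + R)%R.
  have [y hy] : exists y, y \notin [set 0%R] :|: [set (t - sig)%R | t in F v].
    apply: avoid; apply: leq_ltn_trans (cardU_le _ _) _.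
    rewrite cards1; apply: leq_ltn_trans (arB Iv Cv Dv hK); rewrite leq_add2l; exact: leq_imset_card.
  move: hy; rewrite !inE negb_or => /andP [hy0 hy1].
  set g := fun w => if w == u then y else a.
  set sv := (c v + (y + R))%R.
  set c' := fun x => (c x + (if e x v then g x else 0))%R.
  set F' := fun x => if e x v then sv |: F x else F x.
  have [fS [hS1 hS2 hS3]] : exists fS, good S c' F' fS.
    apply: IH; split.
    + move=> x xS; have Ix := hinv x (setU1r v xS).
      apply: (arI (b := e x v)) Ix.
      * rewrite /F'; case: (e x v); last exact: leq_addr.
        by rewrite cardsU1 addnC leq_add2l; case: (_ \notin _).
      * case exv: (e x v) => /=.
          have nv : v \notin [set w | e x w && (w \in S)] by rewrite inE (negbTE vS) andbF.
          apply: (@leq_trans #|v |: [set w | e x w && (w \in S)]|); first by rewrite cardsU1 nv.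
          apply: subset_leq_card; apply/subsetP => w; rewrite !inE.
          by case/orP => [/eqP ->|/andP [-> ->]]; rewrite ?exv ?eqxx ?orbT.
        rewrite add0n; apply: subset_leq_card; apply/subsetP => w; rewrite !inE.
        by case/andP => -> ->; rewrite orbT.
    + move=> x xS hcl; rewrite /c'.
      have -> : e x v = false by apply/negP => /hcl; rewrite (negbTE vS).
      rewrite addr0; apply: hoff; first exact: setU1r.
      by move=> w /hcl; exact: setU1r.
  set f := fun X : {set T} => if X == [set v; u] then y else if v \in X then a else fS X.
  exists f.
  have fvw : forall w, w \in S -> f [set v; w] = g w.
    move=> w wS; rewrite /f /g; case: (eqVneq w u) => [->|hwu]; first by rewrite eqxx.
    rewrite (negbTE (set2_neq' _ (_ : w \notin _))) ?set21 //.
    by rewrite !inE negb_or hwu andbT (Sv w wS).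
  have fxw : forall x w, x \in S -> w \in S -> f [set x; w] = fS [set x; w].
    move=> x w xS wS; have vn : v \notin [set x; w].
      by rewrite !inE negb_or ![v == _]eq_sym !Sv.
    rewrite /f ifF ?(negbTE vn) //; apply/negbTE; rewrite eq_sym.
    exact: set2_neq vn.
  have fwv : forall w, w \in S -> f [set w; v] = g w by move=> w wS; rewrite setUC fvw.
  have sumS : forall x, x \in S -> ssum (v |: S) c f x = ssum S c' fS x.
    move=> x xS; rewrite /ssum /c'.
    case exv: (e x v) => /=.
      rewrite (bigD1 v) /=; last by rewrite exv setU11.
      rewrite fwv // -addrA; congr (_ + (_ + _))%R.
      apply: eq_big => w.
        rewrite !inE; case: (eqVneq w v) => [->|hwv] /=.
          by rewrite (negbTE vS) !andbF.
        by rewrite andbT.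
      move/andP => [/andP [_ wv] hwv]; move: wv; rewrite !inE (negbTE hwv) /= => wS.
      exact: fxw.
    rewrite addr0; congr (_ + _)%R; apply: eq_big => w.
      by rewrite !inE; case: (eqVneq w v) => [->|hwv] /=; rewrite ?exv ?(negbTE vS).
    move/andP => [exw]; rewrite !inE => /orP [/eqP wv|wS]; last exact: fxw.
    by rewrite wv exv in exw.
  have sumv : ssum (v |: S) c f v = sv.
    rewrite /ssum /sv; congr (_ + _)%R.
    rewrite (eq_bigl (fun w => e v w && (w \in S))); last first.
      by move=> w; rewrite !inE; case: (eqVneq w v) => [->|] //=; rewrite e_irr.
    rewrite (eq_bigr g); last by move=> w /andP [_ wS]; exact: fvw.
    rewrite (bigD1 u) /=; last by rewrite evu uS.
    rewrite {1}/g eqxx; congr (_ + _)%R; apply: eq_bigr => w /andP [_ hwu].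
    by rewrite /g (negbTE hwu).
  split.
  + move=> x w hx hw exw; rewrite /f; case: ifP => _; first exact: hy0.
    case: ifP => hv; first exact: ha.
    have [xv wv] : x != v /\ w != v.
      by move/negbT: hv; rewrite !inE negb_or ![v == _]eq_sym => /andP.
    move: hx hw; rewrite !inE (negbTE xv) (negbTE wv) /= => hx hw.
    exact: hS1.
  + move=> x; case/setU1P => [->|xS].
      rewrite sumv; apply/negP => h; move/negP: hy1; apply; apply/imsetP.
      by exists sv => //; rewrite /sv /sig zL4.
    rewrite sumS //; apply: contra (hS2 x xS); rewrite /F'.
    by case: (e x v) => // h; rewrite inE h orbT.
  + have key : forall x, x \in S -> e x v -> ssum S c' fS x != sv.
      move=> x xS exv; apply: contraNneq (hS2 x xS) => ->.
      by rewrite /F' exv setU11.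
    move=> x w hx hw exw.
    case/setU1P: hx => [xv|xS]; case/setU1P: hw => [wv|wS].
    * by move: exw; rewrite xv wv e_irr.
    * rewrite xv sumv (sumS w wS) eq_sym; apply: key => //; by rewrite e_sym -xv.
    * rewrite wv sumv (sumS x xS); apply: key => //; by rewrite -wv.
    * by rewrite (sumS x xS) (sumS w wS); apply: hS3.
- move=> c F [hinv hoff].
  set S3 := [set p; q; r].
  have [[npq nqr npr epq eqr] _] := htc.
  have eqp : e q p by rewrite e_sym.
  have p3 : p \in S3 by rewrite /S3 !inE eqxx.
  have q3 : q \in S3 by rewrite /S3 !inE eqxx orbT.
  have nS3 : forall t, t \in S3 -> t \notin S.
    move=> t; rewrite /S3 !inE => /orP [/orP [] | ] /eqP ->.
    - exact: hnb q p q3 eqp.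
    - exact: hnb p q p3 epq.
    - exact: hnb q r q3 eqr.
  have nb3 : forall x w, x \in S -> e x w -> w \notin S3.
    move=> x w xS exw; apply/negP => w3.
    by move: (hnb w x w3); rewrite e_sym exw xS => /(_ isT).
  have PS : forall x, x \in S -> forall w, (e x w && (w \in S :|: S3)) = (e x w && (w \in S)).
    move=> x xS w; rewrite inE; case exw: (e x w) => //=.
    by rewrite (negbTE (nb3 x w xS exw)) orbF.
  have P3 : forall t, t \in S3 -> forall w, (e t w && (w \in S :|: S3)) = (e t w && (w \in S3)).
    move=> t t3 w; rewrite inE; case etw: (e t w) => //=.
    by rewrite (negbTE (hnb t w t3 etw)).
  have [fS [hS1 hS2 hS3]] : exists fS, good S c F fS.
    apply: IH; split.
    + move=> x xS; move: (hinv x (inUl _ xS)).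
      by rewrite (@eq_finset _ _ _ (PS x xS)).
    + move=> x xS hcl; apply: hoff; first exact: inUl.
      by move=> w /hcl; exact: inUl.
  have [f3 [h31 h32 h33]] : exists f3, good S3 c F f3.
    apply: (triple htc); split.
    + move=> t t3; move: (hinv t (inUr _ t3)).
      by rewrite (@eq_finset _ _ _ (P3 t t3)).
    + move=> t t3 hcl; apply: hoff; first exact: inUr.
      by move=> w /hcl; exact: inUr.
  set f := fun X : {set T} => if X \subset S3 then f3 X else fS X.
  exists f.
  have fS' : forall x w, x \in S -> f [set x; w] = fS [set x; w].
    move=> x w xS; rewrite /f sub2 ifF //; apply/negbTE.
    by rewrite negb_and; apply/orP; left; apply/negP => /nS3; rewrite xS.
  have f3' : forall t w, t \in S3 -> w \in S3 -> f [set t; w] = f3 [set t; w].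
    by move=> t w t3 w3; rewrite /f sub2 t3 w3.
  have sumS : forall x, x \in S -> ssum (S :|: S3) c f x = ssum S c fS x.
    move=> x xS; rewrite /ssum; congr (_ + _)%R; apply: eq_big => w.
      exact: PS.
    by move=> _; exact: fS'.
  have sum3 : forall t, t \in S3 -> ssum (S :|: S3) c f t = ssum S3 c f3 t.
    move=> t t3; rewrite /ssum; congr (_ + _)%R; apply: eq_big => w.
      exact: P3.
    move=> hw; have : e t w && (w \in S3) by rewrite -P3.
    by case/andP => _ w3; exact: f3'.
  split.
  + move=> x w; case/setUP => hx; case/setUP => hw exw.
    * by rewrite fS'; [exact: hS1|].
    * by move: (nb3 x w hx exw); rewrite hw.
    * by move: (hnb x w hx exw); rewrite hw.
    * by rewrite f3'; [exact: h31| |].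
  + move=> x; case/setUP => hx.
    * by rewrite sumS //; exact: hS2.
    * by rewrite sum3 //; exact: h32.
  + move=> x w; case/setUP => hx; case/setUP => hw exw.
    * by rewrite !sumS //; exact: hS3.
    * by move: (nb3 x w hx exw); rewrite hw.
    * by move: (hnb x w hx exw); rewrite hw.
    * by rewrite !sum3 //; exact: h33.
Qed.

End Main.

Lemma ar1 (dc D col dr : nat) : dc < col -> dr <= D -> dc + dr <= D + col - 1.
Proof. lia. Qed.
Lemma ar2 (dp D col : nat) (b : bool) : 3 <= col -> dp <= D -> dp + 2 <= D + col - 1 + b.
Proof. lia. Qed.
Lemma ar3 (db dc D col : nat) : db <= D -> dc < col -> db + dc <= D + col - 1.
Proof. lia. Qed.
Lemma ar4 (da db D col : nat) (b : bool) : col = 2 -> da <= 1 -> 1 < db -> db <= D -> da + 2 <= D + col - 1 + b.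
Proof. lia. Qed.
Lemma ar5 (n t s s' : nat) : t - s <= n.+1 -> s < s' -> s' <= t -> t - s' <= n.
Proof. lia. Qed.

Lemma ar6 (x y n : nat) : x + y = n -> 1 < n -> x <= 1 -> 0 < y.
Proof. lia. Qed.
Lemma ar7 (x c : nat) : x < c -> c <= 2 -> x <= 1.
Proof. lia. Qed.
Lemma ar8 (x c : nat) : x <= 1 -> 2 <= c -> x < c.
Proof. lia. Qed.

Lemma ar9 (t s s' : nat) : t - s <= 0 -> s < s' -> s' <= t -> False.
Proof. lia. Qed.
Lemma ar10 (D c : nat) : 2 <= c -> D < D + c - 1.
Proof. lia. Qed.
Lemma ar11 (D c : nat) : 2 <= c -> 0 < D + c - 1.
Proof. lia. Qed.
Lemma ar12 (D c : nat) : c <= D + 1 -> D + c - 1 <= 2 * D.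
Proof. lia. Qed.

Lemma least (P : nat -> Prop) n : P n -> exists m, m <= n /\ P m /\ forall j, j < m -> ~ P j.
Proof.
elim: n {-2}n (leqnn n) => [|N IH] n hn Pn.
  exists n; split => // ; split => // j hj; lia.
case: (classic (exists j, j < n /\ P j)) => [[j [hj Pj]]|hno].
  have [m [hm [Pm hmin]]] := IH j ltac:(lia) Pj.
  exists m; split; [lia | by split].
exists n; split => //; split => // j hj Pj; apply: hno; by exists j.
Qed.

Section Find.
Variable T : finType.
Variable e : rel T.
Hypothesis e_sym : symmetric e.
Hypothesis e_irr : irreflexive e.
Hypothesis comp_ge3 : forall x : T, 3 <= #|[set y | connect e x y]|.

Lemma no_iso x : exists y, e x y.
Proof.
case: (pickP (e x)) => [y exy | h]; first by exists y.
have := comp_ge3 x.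
have sub : [set y | connect e x y] \subset [set x].
  apply/subsetP => z; rewrite inE; apply: (closed_conn (A := [set x])); last by rewrite inE.
  by move=> a b; rewrite inE => /eqP ->; rewrite h.
by move/(leq_trans)/(_ (subset_leq_card sub)); rewrite cards1.
Qed.

Lemma no_K2 x y : e x y -> (forall z, e x z -> z = y) -> (forall z, e y z -> z = x) -> False.
Proof.
move=> exy hx hy; have := comp_ge3 x.
have sub : [set z | connect e x z] \subset [set x; y].
  apply/subsetP => z; rewrite inE; apply: (closed_conn (A := [set x; y])); last by rewrite set21.
  move=> a b; rewrite !inE => /orP [] /eqP -> => h.
    by rewrite (hx _ h) eqxx orbT.
  by rewrite (hy _ h) eqxx.
move/(leq_trans)/(_ (subset_leq_card sub)); rewrite cards2.
by case: (_ != _).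
Qed.

Lemma col_low j (W : {set T}) : col_ok e j -> W != set0 ->
  exists2 v, v \in W & #|nbhd e v :&: W| < j.
Proof.
move=> /forallP /(_ W) /forallP /(_ [set X in edges e | X \subset W]) /implyP H hW.
have /existsP [v /andP [vW hv]] : [exists v in W, #|[set u | [set v; u] \in [set X in edges e | X \subset W]]| < j].
  apply: H; rewrite hW /=; apply/andP; split.
    by apply/subsetP => X; rewrite inE => /andP [].
  by apply/forallP => X; apply/implyP; rewrite inE => /andP [].
exists v => //; apply: leq_ltn_trans hv; apply: subset_leq_card; apply/subsetP => u.
rewrite !inE => /andP [evu uW]; apply/andP; split; [exact: mem_edge | by rewrite sub2 vW uW].
Qed.

Lemma colP : col_ok e (col_num e).
Proof. by rewrite /col_num; case: ex_minnP. Qed.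

Lemma col_min j : col_ok e j -> col_num e <= j.
Proof. by rewrite /col_num; case: ex_minnP => m _ hm /hm. Qed.

Lemma col2 : 0 < #|T| -> 2 <= col_num e.
Proof.
move=> /card_gt0P [x _].
have [v _ hv] := col_low (W := [set: T]) colP (ltac:(by apply/set0Pn; exists x)).
have [u evu] := no_iso v.
apply: leq_trans hv; apply/card_gt0P; exists u; by rewrite !inE evu.
Qed.

Lemma colD : col_num e <= max_deg e + 1.
Proof.
apply: col_min; apply/forallP => S; apply/forallP => F; apply/implyP.
case/and3P => /set0Pn [v vS] hF _; apply/existsP; exists v; rewrite vS /= addn1 ltnS.
apply: leq_trans (deg_max e v); apply: subset_leq_card; apply/subsetP => u.
rewrite !inE => /(subsetP hF) /(edge_mem e_sym e_irr); by [].
Qed.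

Lemma le1_eq (A : {set T}) x y : #|A| <= 1 -> x \in A -> y \in A -> x = y.
Proof. move/card_le1_eqP => H hx hy; exact: H. Qed.

Lemma find_triple (W : {set T}) : W != set0 -> (forall v u, v \in W -> e v u -> u \in W) ->
  exists p q r, [/\ p \in W, q \in W, r \in W & TC e (max_deg e + col_num e - 1) p q r].
Proof.
move=> hW hcl.
have Dv := deg_max e.
have [x0 x0W] := set0Pn _ hW.
have c2 : 2 <= col_num e by apply: col2; apply/card_gt0P; exists x0.
have degW : forall v, v \in W -> nbhd e v :&: W = nbhd e v.
  move=> v vW; apply/setP => u; rewrite !inE; case evu: (e v u) => //=; exact: hcl evu.
have neq : forall x y, e x y -> x != y.
  by move=> x y exy; apply/eqP => E; move: exy; rewrite E e_irr.
have esym : forall x y, e x y -> e y x by move=> x y; rewrite e_sym.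
case: (ltnP 2 (col_num e)) => hc.
- have [c cW hc'] := col_low colP hW.
  rewrite degW // in hc'.
  have [b ecb] := no_iso c.
  have bW := hcl c b cW ecb.
  case: (leqP 2 (deg e c)) => hdc.
  + have /card_gt1P [p0 [r0 [hp hr hpr]]] : 1 < #|nbhd e c| by [].
    rewrite !inE in hp hr.
    exists p0, c, r0; split; [exact: hcl hp | done | exact: hcl hr |].
    split; first split.
    * by rewrite eq_sym; apply: neq.
    * exact: neq.
    * exact: hpr.
    * exact: esym.
    * exact: hr.
    split; first exact: ar1 hc' (Dv r0).
    by left; apply: ar2 hc (Dv p0).
  + have hu : forall z, e c z -> z = b.
      move=> z ecz; apply: (le1_eq (A := nbhd e c)).
      - by move: hdc; rewrite /deg ltnS.
      - by rewrite inE.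
      - by rewrite inE.
    case: (boolP [exists a, e b a && (a != c)]).
    * case/existsP => a /andP [eba nac].
      exists a, b, c; split; [exact: hcl eba | done | done |].
      split; first split.
      -- by rewrite eq_sym; apply: neq.
      -- by rewrite eq_sym; apply: neq.
      -- exact: nac.
      -- exact: esym.
      -- exact: esym.
      split; first exact: ar3 (Dv b) hc'.
      by left; apply: ar2 hc (Dv a).
    * move/existsPn => hn; exfalso; apply: (no_K2 ecb hu) => z ebz.
      by move: (hn z); rewrite ebz /= negbK => /eqP.
- have c2' : col_num e = 2 by apply/eqP; rewrite eqn_leq hc c2.
  set L := [set v in W | 1 < deg e v].
  case: (eqVneq L set0) => [L0|hL].
    have [u eu] := no_iso x0.
    have uW := hcl x0 u x0W eu.
    have small : forall v, v \in W -> deg e v <= 1.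
      move=> v vW; have : v \notin L by rewrite L0 inE.
      by rewrite inE vW /= -leqNgt.
    exfalso; apply: (no_K2 eu) => z ez.
      by apply: (le1_eq (A := nbhd e x0)); [exact: small x0W | rewrite inE | rewrite inE].
    by apply: (le1_eq (A := nbhd e u)); [exact: small uW | rewrite inE | rewrite inE e_sym].
  have [b bL hbL] := col_low colP hL.
  move: (bL); rewrite inE => /andP [bW hdb].
  have hbL1 : #|nbhd e b :&: L| <= 1.
    by move: hbL; rewrite c2'.
  have /card_gt0P [c] : 0 < #|nbhd e b :\: L|.
    by apply: ar6 (cardsID L (nbhd e b)) hdb hbL1.
  rewrite !inE => /andP [cL ebc].
  have cW := hcl b c bW ebc.
  rewrite cW /= -leqNgt in cL.
  have hu : forall z, e c z -> z = b.
    move=> z ecz; apply: (le1_eq (A := nbhd e c)).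
    - exact: cL.
    - by rewrite inE.
    - by rewrite inE e_sym.
  case: (boolP [exists a, [&& e b a, a != c & a \notin L]]).
  + case/existsP => a /and3P [eba nac naL].
    have aW := hcl b a bW eba.
    have da : deg e a <= 1 by move: naL; rewrite inE aW /= -leqNgt.
    exists a, b, c; split; [done|done|done|].
    split; first split.
    * by rewrite eq_sym; apply: neq.
    * exact: neq.
    * exact: nac.
    * exact: esym.
    * exact: ebc.
    split; first exact: ar3 (Dv b) (ar8 cL c2).
    by left; apply: ar4 c2' da hdb (Dv b).
  + move/existsPn => hn.
    have inL : forall z, e b z -> z != c -> z \in L.
      by move=> z ebz nzc; move: (hn z); rewrite ebz nzc /= negbK.
    have [a [eba nac]] : exists a, e b a /\ a != c.
      have /card_gt1P [x1 [x2 [h1 h2 h12]]] : 1 < #|nbhd e b| by [].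
      rewrite !inE in h1 h2.
      case: (eqVneq x1 c) => [E|n1]; last by exists x1.
      by exists x2; split => //; rewrite -E eq_sym.
    exists a, b, c; split; [exact: hcl eba | done | done |].
    split; first split.
    * by rewrite eq_sym; apply: neq.
    * exact: neq.
    * exact: nac.
    * exact: esym.
    * exact: ebc.
    split; first exact: ar3 (Dv b) (ar8 cL c2).
    right; split.
    * apply/subsetP => z; rewrite inE => ebz.
      case: (eqVneq z c) => [->|nzc]; first by rewrite set22.
      have zbL : z \in nbhd e b :&: L by rewrite in_setI [z \in nbhd e b]inE ebz (inL z ebz nzc).
      have abL : a \in nbhd e b :&: L by rewrite in_setI [a \in nbhd e b]inE eba (inL a eba nac).
      by rewrite (le1_eq hbL1 zbL abL) set21.
    * apply/subsetP => z ecz; rewrite inE in ecz; by rewrite (hu z ecz) set11.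
Qed.

Lemma built_ext S : built e (max_deg e + col_num e - 1) S -> S != setT ->
  exists S', built e (max_deg e + col_num e - 1) S' /\ #|S| < #|S'|.
Proof.
move=> bS hS.
case: (boolP [exists v, (v \notin S) && [exists u, (u \in S) && e v u]]).
- case/existsP => v /andP [vS /existsP [u /andP [uS evu]]].
  exists (v |: S); split; first exact: btV bS vS uS evu.
  by rewrite cardsU1 vS add1n.
- move/existsPn => hn.
  have hcl : forall v u, v \in ~: S -> e v u -> u \in ~: S.
    move=> v u; rewrite !inE => vS evu; apply/negP => uS.
    by move: (hn v); rewrite vS /=; move/existsPn/(_ u); rewrite uS evu.
  have hW : ~: S != set0.
    apply: contra hS => /eqP H; apply/eqP/setP => x; rewrite inE.
    by apply/negPn/negP => xS; move: (in_set0 x); rewrite -H inE xS.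
  have [p [q [r [pW qW rW htc]]]] := find_triple hW hcl.
  exists (S :|: [set p; q; r]); split.
    apply: btT bS htc _ => t w ht etw.
    have tW : t \in ~: S.
      by move: ht; rewrite !inE => /orP [/orP []|] /eqP ->; [move: pW | move: qW | move: rW]; rewrite inE.
    by have := hcl t w tW etw; rewrite inE.
  apply: proper_card; apply/properP; split; first exact: subsetUl.
  by exists p; [rewrite !inE eqxx !orbT | rewrite inE in pW].
Qed.

Lemma built_all : built e (max_deg e + col_num e - 1) setT.
Proof.
suff H : forall n S, built e (max_deg e + col_num e - 1) S -> #|T| - #|S| <= n ->
    built e (max_deg e + col_num e - 1) setT.
  by apply: (H #|T| set0); [constructor | rewrite leq_subr].
elim => [|n IH] S bS hn.
- case: (eqVneq S setT) => [<-|hS] //.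
  have [S' [_ hlt]] := built_ext bS hS.
  by case: (ar9 hn hlt (max_card _)).
- case: (eqVneq S setT) => [<-|hS] //.
  have [S' [bS' hlt]] := built_ext bS hS.
  apply: (IH S' bS'); exact: ar5 hn hlt (max_card _).
Qed.

End Find.

Theorem corollary2 (T : finType) (e : rel T)
  (e_sym : symmetric e) (e_irr : irreflexive e)
  (T_nonempty : 0 < #|T|)
  (comp_ge3 : forall x : T, 3 <= #|[set y | connect e x y]|) :
  (exists k, is_nz_gsum_chi e k /\ k <= max_deg e + col_num e - 1) /\
  max_deg e + col_num e - 1 <= 2 * max_deg e.
Proof.
have c2 : 2 <= col_num e by apply: col2.
have cD : col_num e <= max_deg e + 1 by apply: colD.
have ok : nz_gsum_ok e (max_deg e + col_num e - 1).
  move=> M hM.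
  have hM' : #|M| = max_deg e + col_num e - 1 by rewrite -cardsT.
  have hK : max_deg e < #|M| by rewrite hM'; exact: ar10 c2.
  have bT : built e #|M| setT by rewrite hM'; apply: built_all.
  have hinv : invt e [set: T] (fun _ => 0%R) (fun _ : T => set0 : {set M}).
    split.
      move=> v _; rewrite cards0 add0n; apply: subset_leq_card; apply/subsetP => u.
      by rewrite !inE andbT; exact: id.
    by [].
  have [f [h1 h2 h3]] := solve e_sym e_irr hK bT hinv.
  exists f; split.
  - move=> x /imsetP [[a b]]; rewrite inE /= => eab -> /=.
    by apply: h1; rewrite ?inE.
  - move=> u v euv.
    have E : forall w, wsum e f w = ssum e setT (fun _ => 0%R) f w.
      move=> w; rewrite /wsum /ssum add0r; apply: eq_bigl => z; by rewrite !inE andbT.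
    rewrite !E; apply: h3; by rewrite ?inE.
split; last exact: ar12 cD.
have [m [hm [[m0 okm] hmin]]] := least (P := fun j => 0 < j /\ nz_gsum_ok e j)
  (conj (ar11 (max_deg e) c2) ok).
exists m; split => //; split => //; split => // j j0 jm okj.
exact: (hmin j jm (conj j0 okj)).
Qed.
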